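(* For every space $\mathcal{BL}_F(\{\mathcal{F}_1,\dots,\mathcal{F}_{B_{\mathcal{G}}}\})$ of jointly bandlimited FTVGS with joint bandwidth $B$, there exists a stable sampling set $\mathcal{S}\subseteq\mathcal{V}_{\mathcal{G}}\times\mathcal{V}_{\mathcal{T}}$ (allowing perfect reconstruction of every $\mathbf{X}$ in the space from $\{\mathbf{X}(v,n):(v,n)\in\mathcal{S}\}$) with $|\mathcal{S}|=B$, i.e. total sampling ratio $R_F(\mathcal{S})=B/(NT)$, and with vertex projection $\mathcal{S}_{\mathcal{G}}=\{v:(v,n)\in\mathcal{S}\}$ satisfying $|\mathcal{S}_{\mathcal{G}}|\le B_{\mathcal{G}}$. Hence critical sampling of jointly bandlimited FTVGS is achievable.
   Context: $\mathcal{G}$ undirected graph with $N$ vertices and orthonormal Laplacian eigenvector matrix $\mathbf{U}_{\mathcal{G}}$; $\mathcal{V}_{\mathcal{T}}=\{1,\dots,T\}$ with $\mathbf{U}_{\mathcal{T}}$ the $T\times T$ unitary normalized DFT matrix $\mathbf{U}_{\mathcal{T}}^H(n,m)=T^{-1/2}e^{-j2\pi(m-1)n/T}$. FTVGS $\mathbf{X}\in\mathbb{C}^{N\times T}$; JFT $\mathcal{F}_{\mathcal{J}}(\mathbf{X})=\mathbf{U}_{\mathcal{G}}^H\mathbf{X}\overline{\mathbf{U}}_{\mathcal{T}}$. $\mathcal{F}_i\subseteq\{1,\dots,T\}$ is the allowed support of row $i$ of the JFT; $\mathcal{I}=\{i:\mathcal{F}_i\ne\emptyset\}$, $B_{\mathcal{G}}=|\mathcal{I}|$,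 joint bandwidth $B=\sum_i|\mathcal{F}_i|<NT$. $\mathcal{BL}_F(\{\mathcal{F}_1,\dots,\mathcal{F}_{B_{\mathcal{G}}}\})=\{\mathbf{X}:\mathcal{F}_{\mathcal{J}}(\mathbf{X})(i,f)=0\ \forall f\notin\mathcal{F}_i\}$. Stability of $\mathcal{S}$: $A\|\mathbf{X}\|^2\le\sum_{(v,n)\in\mathcal{S}}|\mathbf{X}(v,n)|^2\le A'\|\mathbf{X}\|^2$ for some $0<A\le A'<\infty$ and all $\mathbf{X}$ in the space. $R_F(\mathcal{S})=|\mathcal{S}|/(NT)$. *)

(* Defs.v *)
From mathcomp Require Import all_boot all_algebra.
From mathcomp Require Import reals trigo.
From mathcomp Require Export complex.
Set Implicit Arguments.
Unset Strict Implicit.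
Unset Printing Implicit Defensive.
Import GRing.Theory Num.Theory.
Local Open Scope ring_scope.
Local Open Scope complex_scope.

Section FTVGS.
Variable R : realType.

Definition conjmx m n (A : 'M[R[i]]_(m, n)) : 'M[R[i]]_(m, n) := map_mx conjc A.
Definition adjmx m n (A : 'M[R[i]]_(m, n)) : 'M[R[i]]_(n, m) := (conjmx A)^T.
Definition unitarymx n (U : 'M[R[i]]_n) : Prop := adjmx U *m U = 1%:M.

Definition cplxmx m n (A : 'M[R]_(m, n)) : 'M[R[i]]_(m, n) := map_mx (real_complex R) A.

Definition laplacian N (W : 'M[R]_N) : 'M[R]_N :=
  diag_mx (\row_(i < N) \sum_(j < N) W i j) - W.

Definition undirected_graph N (W : 'M[R]_N) : Prop :=
  W^T = W /\ (forall i j, 0 <= W i j).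

Definition laplacian_eigenbasis N (W : 'M[R]_N) (UG : 'M[R[i]]_N) : Prop :=
  unitarymx UG /\
  exists lam : 'rV[R]_N, cplxmx (laplacian W) *m UG = UG *m diag_mx (cplxmx lam).

Definition dft_root (T : nat) : R[i] :=
  cos (2 * pi / T%:R) +i* sin (2 * pi / T%:R).

(* unitary normalized DFT matrix (0-based indices):
   U_T(m,n) = T^{-1/2} e^{j 2 pi m n / T}, so U_T^H(n,m) = T^{-1/2} e^{-j 2 pi m n / T} *)
Definition UT (T : nat) : 'M[R[i]]_T :=
  \matrix_(m < T, n < T) (((Num.sqrt (T%:R : R))^-1)%:C * dft_root T ^+ (m * n)%N).

Definition JFT N T (UG : 'M[R[i]]_N) (X : 'M[R[i]]_(N, T)) : 'M[R[i]]_(N, T) :=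
  adjmx UG *m X *m conjmx (UT T).

Definition in_BL N T (UG : 'M[R[i]]_N) (F : 'I_N -> {set 'I_T})
  (X : 'M[R[i]]_(N, T)) : Prop :=
  forall (i : 'I_N) (f : 'I_T), f \notin F i -> JFT UG X i f = 0.

Definition joint_bw N T (F : 'I_N -> {set 'I_T}) : nat := (\sum_(i < N) #|F i|)%N.
Definition graph_bw N T (F : 'I_N -> {set 'I_T}) : nat := #|[set i | F i != set0]|.

Definition sqnorm N T (X : 'M[R[i]]_(N, T)) : R[i] :=
  \sum_(v < N) \sum_(n < T) `|X v n| ^+ 2.
Definition sample_energy N T (S : {set 'I_N * 'I_T}) (X : 'M[R[i]]_(N, T)) : R[i] :=
  \sum_(p in S) `|X p.1 p.2| ^+ 2.

Definition stable_sampling N T (UG : 'M[R[i]]_N) (F : 'I_N -> {set 'I_T})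
  (S : {set 'I_N * 'I_T}) : Prop :=
  exists A A' : R, 0 < A /\ A <= A' /\
    forall X, in_BL UG F X ->
      (A%:C * sqnorm X <= sample_energy S X) /\ (sample_energy S X <= A'%:C * sqnorm X).

Definition vertex_proj N T (S : {set 'I_N * 'I_T}) : {set 'I_N} := [set p.1 | p in S].

Definition sampling_ratio N T (S : {set 'I_N * 'I_T}) : R := #|S|%:R / (N * T)%:R.

End FTVGS.

(* Main.v *)
Require Import Defs.
From mathcomp Require Import all_boot all_order all_algebra.
From mathcomp Require Import reals trigo complex.
From mathcomp Require Import ring lra.
Import Order.TTheory GRing.Theory Num.Theory.
Local Open Scope ring_scope.
Local Open Scope complex_scope.

Section S.
Variable R : realType.
Local Notation C := R[i].

Lemma normCE (x : C) : `|x| = (Normc.normc x)%:C.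
Proof. by []. Qed.

Lemma cis_mul (a b : R) :
  (cos a +i* sin a) * (cos b +i* sin b) = cos (a + b) +i* sin (a + b).
Proof. by rewrite cosD sinD; simpc; congr (_ +i* _); rewrite addrC [sin a * _]mulrC. Qed.

Lemma cisX (a : R) j : (cos a +i* sin a) ^+ j = cos (a * j%:R) +i* sin (a * j%:R).
Proof.
elim: j => [|j IH]; first by rewrite expr0 mulr0 cos0 sin0.
by rewrite exprS IH cis_mul -[j.+1]addn1 natrD mulrDr mulr1 addrC.
Qed.

Lemma dft_rootX T j : dft_root R T ^+ j =
  cos (2 * pi / T%:R * j%:R) +i* sin (2 * pi / T%:R * j%:R).
Proof. exact: cisX. Qed.

Lemma dft_rootT T : (0 < T)%N -> dft_root R T ^+ T = 1.
Proof.
move=> T0; rewrite dft_rootX mulfVK ?pnatr_eq0 -?lt0n //.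
by rewrite mulr_natl cos2pi sin2pi.
Qed.
End S.
Section S2.
Variable R : realType.
Lemma sin_cos_not1 (x : R) : 0 < x -> x < pi *+ 2 -> cos x +i* sin x != 1.
Proof.
move=> x0 x2; apply/negP => /eqP [c1 s0].
have [xlt|xge] := ltP x pi.
  by have := @sin_gt0_pi _ x; rewrite x0 xlt s0 ltxx => /(_ isT).
move: xge; rewrite le_eqVlt => /orP[/eqP px|pltx].
  by move: c1; rewrite -px cospi; lra.
have h : 0 < x - pi < pi by rewrite subr_gt0 pltx /= ltrBlDr -mulr2n.
move: (sin_gt0_pi h); rewrite -(opprK (sin (x - pi))) -sinDpi subrK s0 oppr0 ltxx //.
Qed.
End S2.
Section S3.
Variable R : realType.
Lemma dft_root_neq1 T j : (0 < j)%N -> (j < T)%N -> dft_root R T ^+ j != 1.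
Proof.
move=> j0 jT; rewrite dft_rootX; apply: sin_cos_not1.
  by rewrite mulr_gt0 ?divr_gt0 ?mulr_gt0 ?pi_gt0 ?ltr0n // (leq_trans j0 (ltnW jT)).
have T0 : (0 < T%:R :> R) by rewrite ltr0n (leq_trans j0 (ltnW jT)).
rewrite mulrAC ltr_pdivrMr // -mulr_natl mulr1.
have jT' : (j%:R < T%:R :> R) by rewrite ltr_nat.
have := pi_gt0 R; nra.
Qed.
End S3.
Section S4.
Variable R : realType.
Local Notation C := R[i].

Lemma dft_root_conj T : dft_root R T * conjc (dft_root R T) = 1.
Proof.
rewrite /dft_root /=; simpc.
by rewrite -!expr2 cos2Dsin2 mulrC addNr.
Qed.

Lemma conjcM (a b : C) : conjc (a * b) = conjc a * conjc b. Proof. exact: rmorphM. Qed.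
Lemma conjcX (a : C) n : conjc (a ^+ n) = conjc a ^+ n. Proof. exact: rmorphXn. Qed.
Lemma conjcKK (a : C) : conjc (conjc a) = a. Proof. exact: conjcK. Qed.
Lemma conjc11 : conjc (1 : C) = 1. Proof. exact: conjc1. Qed.
Lemma conjcR (x : R) : conjc (x%:C) = x%:C. Proof. exact: conjc_real. Qed.

Lemma UT_conj T : UT R T *m Defs.conjmx (UT R T) = 1%:M.
Proof.
case: T => [|T]; first by apply/matrixP => [[]].
set w := dft_root R T.+1.
set c : C := ((Num.sqrt (T.+1%:R : R))^-1)%:C.
have c2 : c * c = (T.+1%:R)^-1.
  rewrite -rmorphM /= -expr2 exprVn sqr_sqrtr ?ler0n //.
  by rewrite rmorphV ?unitfE ?pnatr_eq0 //= rmorph_nat.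
have wT : w ^+ T.+1 = 1 by apply: dft_rootT.
have wwc := dft_root_conj T.+1; rewrite -/w in wwc.
apply/matrixP => p q; rewrite !mxE.
have Ucj : forall i j, Defs.conjmx (UT R T.+1) i j = c * (conjc w)^+(i*j).
  by move=> i j; rewrite !mxE conjcM conjcR conjcX.
under eq_bigr => k _ do rewrite Ucj mxE -/w -/c mulrACA c2 [(k * q)%N]mulnC !exprM -exprMn.
rewrite -mulr_sumr.
set z := w ^+ p * conjc w ^+ q.
have zT : z ^+ T.+1 = 1.
  rewrite /z exprMn -!exprM mulnC exprM wT expr1n mul1r mulnC exprM.
  by rewrite -conjcX wT conjc11 expr1n.
case: (eqVneq p q) => [epq|pq].
  rewrite /z epq -exprMn wwc expr1n.
  under eq_bigr => k _ do rewrite expr1n.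
  by rewrite sumr_const card_ord mulVf ?pnatr_eq0 // eqxx.
have z1 : z != 1.
  case: (ltngtP p q) => [pltq|qltp|/val_inj peq]; last by rewrite peq eqxx in pq.
  - rewrite /z -(subnKC (ltnW pltq)) exprD mulrA -exprMn wwc expr1n mul1r.
    apply/negP => /eqP h.
    have h' : w ^+ (q - p) = 1 by rewrite -[w]conjcKK -conjcX h conjc11.
    have q1 : (0 < q - p)%N by rewrite subn_gt0.
    have q2 : (q - p < T.+1)%N by exact: (leq_ltn_trans (leq_subr _ _) (ltn_ord q)).
    by have := @dft_root_neq1 R T.+1 (q - p) q1 q2; rewrite -/w h' eqxx.
  - rewrite /z -(subnKC (ltnW qltp)) exprD mulrAC -exprMn wwc expr1n mul1r.
    by apply: dft_root_neq1; rewrite ?subn_gt0 // (leq_ltn_trans (leq_subr _ _) (ltn_ord p)).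
have : (z - 1) * \sum_(i < T.+1) z ^+ i = 0 by rewrite -subrX1 zT subrr.
by move/eqP; rewrite mulf_eq0 subr_eq0 (negbTE z1) /= => /eqP ->; rewrite mulr0.
Qed.

Lemma conjUT T : Defs.conjmx (UT R T) *m UT R T = 1%:M.
Proof. exact/mulmx1C/UT_conj. Qed.
End S4.


Section Gen.
Variable R : realType.
Local Notation C := R[i].

Lemma le_sum_term {I : finType} (f : I -> C) i0 :
  (forall i, 0 <= f i) -> f i0 <= \sum_i f i.
Proof.
move=> f0; rewrite (bigD1 i0) //= lerDl; exact: sumr_ge0.
Qed.

Variables (m N T : nat) (E : 'I_m -> 'M[C]_(N, T)) (P : 'I_m -> 'I_N * 'I_T).
Definition Phi (y : 'I_m -> C) : 'M[C]_(N, T) := \sum_a y a *: E a.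
Definition Qm : 'M[C]_m := \matrix_(a, b) E b (P a).1 (P a).2.

Lemma PhiE y v n : Phi y v n = \sum_a y a * E a v n.
Proof. by rewrite /Phi summxE; apply: eq_bigr => a _; rewrite mxE. Qed.

Lemma stab_bound : Qm \in unitmx -> exists K : R, 1 <= K /\ forall y,
  sqnorm (Phi y) <= K%:C * \sum_a `|Phi y (P a).1 (P a).2| ^+ 2.
Proof.
move=> Qu.
set Qi := invmx Qm.
pose L b v n := \sum_a Qi a b * E a v n.
pose CmR := \sum_b \sum_v \sum_n Normc.normc (L b v n).
pose Cm : C := CmR%:C.
have CmE : Cm = \sum_b \sum_v \sum_n `|L b v n|.
  by rewrite /Cm /CmR rmorph_sum; apply: eq_bigr => b _;
    rewrite rmorph_sum; apply: eq_bigr => v _; rewrite rmorph_sum.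
have Cm0 : 0 <= Cm by rewrite CmE; do 3 (apply: sumr_ge0 => ? _).
have LC b v n : `|L b v n| <= Cm.
  rewrite CmE.
  apply: (le_trans _ (le_sum_term (fun b => \sum_v \sum_n `|L b v n|) b _)); last first.
    by move=> ?; do 2 (apply: sumr_ge0 => ? _).
  apply: (le_trans _ (le_sum_term (fun v => \sum_n `|L b v n|) v _)); last first.
    by move=> ?; apply: sumr_ge0 => ? _.
  by apply: (le_sum_term (fun n => `|L b v n|) n _).
pose KR : R := (N * T)%:R * (CmR * m%:R) ^+ 2 + 1.
have KR0 : 1 <= KR.
  rewrite /KR lerDr.
  by rewrite mulr_ge0 ?ler0n ?sqr_ge0.
exists KR; split => // y.
set s := fun a => Phi y (P a).1 (P a).2.
set Es := \sum_a `|s a| ^+ 2.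
have Es0 : 0 <= Es by apply: sumr_ge0 => a _; rewrite exprn_ge0.
have ys a : y a = \sum_b Qi a b * s b.
  have h : Qm *m (\col_b y b) = \col_b s b.
    apply/matrixP => a' j; rewrite !mxE /s PhiE; apply: eq_bigr => b _.
    by rewrite !mxE mulrC.
  have := congr1 (fun M => (Qi *m M) a 0) h.
  rewrite /Qi mulKmx // mxE => ->; rewrite mxE; apply: eq_bigr => b _; rewrite mxE.
  done.
have PL v n : Phi y v n = \sum_b s b * L b v n.
  rewrite PhiE.
  under eq_bigr => a _ do rewrite ys mulr_suml.
  rewrite exchange_big /=; apply: eq_bigr => b _.
  rewrite /L mulr_sumr; apply: eq_bigr => a _; ring.
have sb b : `|s b| <= sqrtC Es.
  rewrite -(sqrCK (normr_ge0 (s b))) ler_sqrtC ?qualifE //= ?exprn_ge0 //.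
  exact: (le_sum_term (fun a => `|s a| ^+ 2) b (fun a => exprn_ge0 _ (normr_ge0 _))).
have Xb v n : `|Phi y v n| <= Cm * (m%:R * sqrtC Es).
  rewrite PL; apply: (le_trans (ler_norm_sum _ _ _)).
  apply: (@le_trans _ _ (\sum_(b < m) Cm * sqrtC Es)); last first.
    rewrite sumr_const card_ord.
    suff -> : Cm * sqrtC Es *+ m = Cm * (m%:R * sqrtC Es) by [].
    by rewrite -mulr_natr; ring.
  apply: ler_sum => b _; rewrite normrM.
  by rewrite mulrC ler_pM ?normr_ge0.
have Xb2 v n : `|Phi y v n| ^+ 2 <= Cm ^+ 2 * m%:R ^+ 2 * Es.
  apply: (le_trans (lerXn2r 2 _ _ (Xb v n)));
    rewrite ?qualifE /= ?normr_ge0 ?mulr_ge0 ?ler0n ?sqrtC_ge0 //.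
  by rewrite !exprMn sqrtCK mulrA.
rewrite /sqnorm.
apply: (@le_trans _ _ (\sum_(v < N) \sum_(n < T) (Cm ^+ 2 * m%:R ^+ 2 * Es))).
  by apply: ler_sum => v _; apply: ler_sum => n _; exact: Xb2.
rewrite !sumr_const !card_ord -mulrnA -mulr_natl.
rewrite /KR rmorphD rmorphM rmorph1 /= rmorphXn rmorphM /= -/Cm.
have hn (j : nat) : (j%:R : R)%:C = j%:R by exact: rmorph_nat.
rewrite ?rmorphM /= !hn mulrDl mul1r.
suff -> : Cm ^+ 2 * (m%:R * 1) ^+ 2 * Es *+ (T * N) =
   N%:R * T%:R * (Cm * m%:R) ^+ 2 * Es by rewrite lerDl.
by rewrite -mulr_natr natrM; ring.
Qed.
End Gen.
Arguments Phi {R m N T}.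
Arguments Qm {R m N T}.
Arguments PhiE {R m N T}.
Arguments stab_bound {R m N T}.

Set Implicit Arguments.
Unset Strict Implicit.

Lemma sel_rows (F0 : fieldType) m n (A : 'M[F0]_(m, n)) :
  (forall z : 'cV_n, A *m z = 0 -> z = 0) ->
  exists f : 'I_n -> 'I_m, injective f /\ rowsub f A \in unitmx.
Proof.
move=> Ainj.
have rf : row_full A.
  rewrite /row_full -mxrank_tr; apply: inj_row_free => v hv.
  apply: trmx_inj; rewrite trmx0; apply: Ainj.
  by rewrite -[A]trmxK -trmx_mul hv trmx0.
exists (fullrankfun rf); split; first exact: fullrankfun_inj.
exact: fullrowsub_unit.
Qed.

Section Main.
Variables (R : realType) (N T : nat) (UG : 'M[R[i]]_N) (F : 'I_N -> {set 'I_T}).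
Hypothesis UGu : adjmx UG *m UG = 1%:M.
Local Notation C := R[i].

Definition Mset : {set 'I_N * 'I_T} := [set p | p.2 \in F p.1].
Local Notation m := #|Mset|.
Definition ev (a : 'I_m) : 'I_N * 'I_T := enum_val a.

Lemma ev_inj : injective ev.
Proof. exact: enum_val_inj. Qed.
Lemma evM a : ev a \in Mset.
Proof. exact: enum_valP. Qed.

Definition Dy (y : 'I_m -> C) : 'M[C]_(N, T) :=
  \sum_a y a *: delta_mx (ev a).1 (ev a).2.

Lemma DyE y i j : Dy y i j = \sum_a y a * (ev a == (i, j))%:R.
Proof.
rewrite /Dy summxE; apply: eq_bigr => a _; rewrite !mxE; congr (_ * _%:R).
by case: (ev a) => x z /=; rewrite xpair_eqE [x == i]eq_sym [z == j]eq_sym.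
Qed.

Lemma Dy_ev y a : Dy y (ev a).1 (ev a).2 = y a.
Proof.
rewrite DyE.
have -> : ((ev a).1, (ev a).2) = ev a by case: (ev a).
rewrite (bigD1 a) //= eqxx mulr1 big1 ?addr0 //.
move=> b ba.
by case: eqP => [/ev_inj eba|]; [rewrite eba eqxx in ba | rewrite mulr0].
Qed.

Lemma Dy_out y i j : (i, j) \notin Mset -> Dy y i j = 0.
Proof.
move=> ijM; rewrite DyE big1 // => a _.
by case: eqP => [eaij|]; [move: (evM a); rewrite eaij (negbTE ijM) | rewrite mulr0].
Qed.

Definition E (a : 'I_m) : 'M[C]_(N, T) := UG *m delta_mx (ev a).1 (ev a).2 *m UT R T.

Lemma PhiDy y : Phi E y = UG *m Dy y *m UT R T.
Proof.
rewrite /Phi /Dy mulmx_sumr mulmx_suml; apply: eq_bigr => a _.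
by rewrite /E scalemxAl scalemxAr.
Qed.

Lemma spanBL X : in_BL UG F X -> X = Phi E (fun a => JFT UG X (ev a).1 (ev a).2).
Proof.
move=> XBL; rewrite PhiDy.
have -> : Dy (fun a => JFT UG X (ev a).1 (ev a).2) = JFT UG X.
  apply/matrixP => i j.
  case: (boolP ((i, j) \in Mset)) => ijM.
    by have := Dy_ev (fun a => JFT UG X (ev a).1 (ev a).2) (enum_rank_in ijM (i, j));
      rewrite /ev enum_rankK_in.
  rewrite Dy_out // XBL //.
  by move: ijM; rewrite inE.
rewrite /JFT !mulmxA (mulmx1C UGu) mul1mx -mulmxA conjUT mulmx1.
done.
Qed.

Lemma sum_ind_inj (I J : finType) (e : I -> J) (f : I -> C) a :
  injective e -> \sum_i f i * (e i == e a)%:R = f a.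
Proof.
move=> einj; rewrite (bigD1 a) //= eqxx mulr1 big1 ?addr0 // => b ba.
by case: eqP => [/einj eba|]; [rewrite eba eqxx in ba | rewrite mulr0].
Qed.

Definition Iset : {set 'I_N} := [set i | F i != set0].
Local Notation k := #|Iset|.
Definition eI (c : 'I_k) : 'I_N := enum_val c.
Lemma eI_inj : injective eI. Proof. exact: enum_val_inj. Qed.

Definition Gfull : 'M[C]_(N, k) := \matrix_(v, c) UG v (eI c).

Lemma Gfull_inj (z : 'cV_k) : Gfull *m z = 0 -> z = 0.
Proof.
move=> Gz.
pose z' : 'cV[C]_N := \col_i \sum_c z c 0 * (eI c == i)%:R.
have Uz : UG *m z' = 0.
  rewrite -Gz; apply/matrixP => v j; rewrite (ord1 j) !mxE.
  under eq_bigr => i _ do rewrite mxE mulr_sumr.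
  rewrite exchange_big /=; apply: eq_bigr => c _; rewrite mxE.
  under eq_bigr => i _ do rewrite mulrCA.
  rewrite -mulr_sumr mulrC; congr (_ * _).
  under eq_bigr => i _ do rewrite eq_sym.
  by rewrite (bigD1 (eI c)) //= eqxx mulr1 big1 ?addr0 // => i /negbTE ->; rewrite mulr0.
have z'0 : z' = 0 by rewrite -[z']mul1mx -UGu -mulmxA Uz mulmx0.
apply/matrixP => c j; rewrite (ord1 j) mxE.
have := congr1 (fun M : 'cV[C]_N => M (eI c) 0) z'0; rewrite !mxE sum_ind_inj //; exact: eI_inj.
Qed.


Lemma XUT y : Phi E y *m Defs.conjmx (UT R T) = UG *m Dy y.
Proof. by rewrite PhiDy -mulmxA UT_conj mulmx1. Qed.

Lemma inI i n : n \in F i -> i \in Iset.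
Proof. by move=> nF; rewrite inE; apply/set0Pn; exists n. Qed.

Lemma key_inj (fv : 'I_k -> 'I_N) (Gu : rowsub fv Gfull \in unitmx) y :
  (forall b n, Phi E y (fv b) n = 0) -> forall a, y a = 0.
Proof.
move=> y0 a.
pose DI : 'M[C]_(k, T) := \matrix_(c, n) Dy y (eI c) n.
have GD : rowsub fv Gfull *m DI = 0.
  apply/matrixP => b n; rewrite !mxE.
  have := congr1 (fun M : 'M[C]_(N, T) => M (fv b) n) (XUT y).
  rewrite /= mxE big1; last by move=> j _; rewrite y0 mul0r.
  rewrite mxE (bigID (mem Iset)) /= [X in _ + X]big1 ?addr0; last first.
    move=> i iI; rewrite Dy_out ?mulr0 //; rewrite inE /=.
    by apply: contra iI => /inI.
  rewrite big_enum_val /= => /esym h; rewrite -[RHS]h; apply: eq_bigr => c _.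
  by rewrite !mxE.
have DI0 : DI = 0 by rewrite -[DI]mul1mx -(mulVmx Gu) -mulmxA GD mulmx0.
have aI : (ev a).1 \in Iset by apply: (@inI _ (ev a).2); have := evM a; rewrite inE.
have := congr1 (fun M : 'M[C]_(k, T) => M (enum_rank_in aI (ev a).1) (ev a).2) DI0.
by rewrite !mxE /eI enum_rankK_in // Dy_ev.
Qed.

End Main.


Lemma cardM (N T : nat) (F : 'I_N -> {set 'I_T}) : #|Mset F| = joint_bw F.
Proof.
rewrite /joint_bw -sum1_card big_mkcond /=.
rewrite (eq_bigr (fun p => if (p.1, p.2) \in Mset F then 1 else 0)%N); last by case.
rewrite -(pair_bigA _ (fun i j => if (i, j) \in Mset F then 1 else 0)%N) /=.
apply: eq_bigr => i _; rewrite -sum1_card [RHS]big_mkcond /=; apply: eq_bigr => j _.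
by rewrite inE.
Qed.

Section Cols.
Variables (R : realType) (N T : nat) (UG : 'M[R[i]]_N) (F : 'I_N -> {set 'I_T}).
Hypothesis UGu : adjmx UG *m UG = 1%:M.
Local Notation C := R[i].
Local Notation k := #|Iset F|.
Local Notation m := #|Mset F|.
Variable fv : 'I_k -> 'I_N.
Hypothesis Gu : rowsub fv (Gfull UG F) \in unitmx.

Definition ecol (c : 'I_#|[set: 'I_k * 'I_T]|) : 'I_k * 'I_T := enum_val c.

Definition Wm : 'M[C]_(#|[set: 'I_k * 'I_T]|, m) :=
  \matrix_(c, a) E UG a (fv (ecol c).1) (ecol c).2.

Lemma Wm_inj (z : 'cV_m) : Wm *m z = 0 -> z = 0.
Proof.
move=> Wz; apply/matrixP => a j; rewrite (ord1 j) mxE.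
apply: (@key_inj _ _ _ _ _ _ Gu (fun a => z a 0)) => b n.
have bn : (b, n) \in [set: 'I_k * 'I_T] by rewrite in_setT.
have := congr1 (fun M : 'cV[C]_(_) => M (enum_rank_in bn (b, n)) 0) Wz.
rewrite !mxE PhiE => h; rewrite -[RHS]h; apply: eq_bigr => a' _.
by rewrite /Wm !mxE /ecol enum_rankK_in // mulrC.
Qed.
End Cols.

Theorem theorem6 (R : realType) (N T : nat) (W : 'M[R]_N) (UG : 'M[R[i]]_N)
  (F : 'I_N -> {set 'I_T}) :
  undirected_graph W ->
  laplacian_eigenbasis W UG ->
  (joint_bw F < N * T)%N ->
  exists S : {set 'I_N * 'I_T},
    #|S| = joint_bw F /\
    sampling_ratio R S = (joint_bw F)%:R / (N * T)%:R /\
    (#|vertex_proj S| <= graph_bw F)%N /\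
    stable_sampling UG F S.
Proof.
move=> _ [UGu _] _.
have [fv [fvinj Gu]] := sel_rows (@Gfull_inj _ _ _ _ F UGu).
have [g [ginj Qu]] := sel_rows (Wm_inj Gu).
pose P a := (fv (ecol (g a)).1, (ecol (g a)).2).
have Pinj : injective P.
  move=> a a' [/fvinj e1 e2].
  apply: ginj; apply: enum_val_inj; rewrite -/(ecol _) -/(ecol _).
  by move: e1 e2; case: (ecol (g a)) => ? ?; case: (ecol (g a')) => ? ? /= -> ->.
have QE : Qm (E UG (F:=F)) P = rowsub g (Wm UG fv).
  by apply/matrixP => a b; rewrite !mxE.
pose S := P @: [set: 'I_#|Mset F|].
have cS : #|S| = joint_bw F by rewrite card_imset // cardsT card_ord cardM.
exists S; split => //; split; first by rewrite /sampling_ratio cS.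
split.
  apply: (leq_trans (subset_leq_card (_ : _ \subset fv @: [set: _]))).
    apply/subsetP => v /imsetP [p /imsetP [a _ ->] ->].
    by apply/imsetP; exists (ecol (g a)).1.
  by rewrite (leq_trans (leq_imset_card _ _)) // cardsT card_ord.
have [K [K0 HK]] := stab_bound (E UG (F:=F)) P (ltac:(by rewrite QE)).
have K0' : 0 < K by apply: lt_le_trans K0.
exists K^-1, 1; split; first by rewrite invr_gt0.
split; first by rewrite invr_le1 ?unitfE ?gt_eqF.
move=> X XBL.
have eS : sample_energy S X = \sum_a `|X (P a).1 (P a).2| ^+ 2.
  rewrite /sample_energy big_imset /=; last by move=> ? ? _ _; exact: Pinj.
  by apply: eq_bigl => a; rewrite in_setT.
split.
  rewrite eS (spanBL UGu XBL).
  set y := fun a => _.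
  have h := HK y.
  have Ki : 0 <= K^-1%:C by rewrite lecR invr_ge0 ltW.
  have := ler_wpM2l Ki h.
  by rewrite mulrA -rmorphM /= mulVf ?gt_eqF // mul1r.
rewrite rmorph1 mul1r /sample_energy /sqnorm pair_bigA /=.
rewrite [X in _ <= X](bigID (mem S)) /= lerDl.
by apply: sumr_ge0 => p _; rewrite exprn_ge0.
Qed.
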